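(* Let $A\in {\operatorname{\mathsf{TPD}}}_n(\mathbb{S}_{\max}^\vee)$, with $\gamma_i=a_{ii}$ for $i\in[n]$ ordered so that $\gamma_1\succeq\gamma_2\succeq\cdots\succeq\gamma_n$, and $B_k=\gamma_k I\ominus A$. Assume that $\gamma=\gamma_1$ is simple as an algebraic $\mathbb{S}_{\max}$-eigenvalue of $A$, that is $\gamma_1\succ \gamma_2$. Then, we have \[ v^{(1)}=(\gamma I \ominus A )^{\mathrm{adj}}_{:,1}=\gamma^{n-1} (\gamma^{-1}A)^*_{:,1}\enspace .\] Moreover $A v^{(1)}= \gamma v^{(1)}$. In particular, when $v^{(1)} \in (\mathbb{S}_{\max}^\vee)^n$, $v^{(1)}$ is the unique leading $\mathbb{S}_{\max}$-eigenvector (up to a multiplicative constant), and this is a strong $\mathbb{S}_{\max}$-eigenvector.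
   Context: $\mathbb{S}_{\max}$ is the symmetrized tropical semiring over a divisible totally ordered abelian group, with zero $\mathbf{0}$, unit $\mathbf{1}$, minus $\ominus$; $\mathbb{S}_{\max}^\vee$ is the set of signed elements (positive, negative or $\mathbf{0}$), and $a\,\nabla\, b$ iff $a\ominus b$ is balanced. $a\preceq b$ iff $b=a\oplus b$, and $a\prec b$ iff $a\preceq b$, $a\neq b$. $A\in{\operatorname{\mathsf{TPD}}}_n(\mathbb{S}_{\max}^\vee)$: $A$ symmetric with signed entries, $\mathbf{0}<a_{ii}$ and $a_{ij}^2<a_{ii}a_{jj}$ for $i\ne j$ (where $a<b$ iff $b\ominus a$ is positive). $\det$ is the signed determinant and $(M^{\mathrm{adj}})_{ij}=(\ominus\mathbf{1})^{i+j}\det M[\hat j,\hat i]$; $M_{:,j}$ is the $j$-th column. The Kleene star is $M^*=\bigoplus_{k\ge0}M^k$ (with $M^0=I$). An $\mathbb{S}_{\max}$-eigenvector for the eigenvalue $\gamma$ is a $v\in(\mathbb{S}_{\max}^\vee)^n\setminus\{\mathbf{0}\}$ with $Av\,\nabla\,\gamma v$; it is strong if $Av=\gamma v$; a leading eigenvector is one associated with the largest eigenvalue $\gamma_1$. The $\mathbb{S}_{\max}$-eigenvalues of $A$ are its diagonal entries. *)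

(* Defs.v *)
(* Symmetrized tropical semiring S_max over a divisible
   totally ordered abelian group (written additively here). *)
From mathcomp Require Import all_boot all_order all_algebra.
From mathcomp Require Import perm.
Set Implicit Arguments. Unset Strict Implicit. Unset Printing Implicit Defensive.
Import GRing.Theory.
Local Open Scope ring_scope.

Record divTOAG := DivTOAG {
  tog_car :> zmodType;
  tog_le : rel tog_car;
  tog_refl : reflexive tog_le;
  tog_antisym : forall a b, tog_le a b -> tog_le b a -> a = b;
  tog_trans : transitive tog_le;
  tog_total : total tog_le;
  tog_addr : forall a b c, tog_le a b -> tog_le (a + c) (b + c);
  tog_div : forall (n : nat) (g : tog_car), (0 < n)%N -> exists h, h *+ n = g
}.

Section Smax.
Variable T : divTOAG.
Local Notation G := (tog_car T).


(* Elements of S_max: 0, positive (+)g, negative (-)g, balanced g^o. *)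
Inductive smax := SZero | SPos of G | SNeg of G | SBal of G.

Definition smod (x : smax) : G :=
  match x with SZero => 0 | SPos g => g | SNeg g => g | SBal g => g end.

Definition sadd (x y : smax) : smax :=
  match x, y with
  | SZero, _ => y
  | _, SZero => x
  | _, _ =>
    if smod x == smod y then
      match x, y with
      | SPos g, SPos _ => SPos g
      | SNeg g, SNeg _ => SNeg g
      | _, _ => SBal (smod x)
      end
    else if @tog_le T (smod x) (smod y) then y else x
  end.

Definition smul (x y : smax) : smax :=
  match x, y with
  | SZero, _ | _, SZero => SZero
  | SPos g, SPos h => SPos (g + h)
  | SPos g, SNeg h => SNeg (g + h)
  | SNeg g, SPos h => SNeg (g + h)
  | SNeg g, SNeg h => SPos (g + h)
  | _, _ => SBal (smod x + smod y)
  end.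

Definition sopp (x : smax) : smax :=
  match x with SZero => SZero | SPos g => SNeg g | SNeg g => SPos g | SBal g => SBal g end.

Definition sone : smax := SPos 0.

Definition sinv (x : smax) : smax :=
  match x with SZero => SZero | SPos g => SPos (- g) | SNeg g => SNeg (- g) | SBal g => SBal (- g) end.

Definition sexp (x : smax) (k : nat) : smax := iter k (smul x) sone.

Definition ssgnpow (k : nat) : smax := if odd k then sopp sone else sone.

Definition is_pos (x : smax) : Prop := exists g, x = SPos g.
Definition signed (x : smax) : Prop := forall g, x <> SBal g.
Definition balanced (x : smax) : Prop := x = SZero \/ exists g, x = SBal g.

Definition snabla (a b : smax) : Prop := balanced (sadd a (sopp b)).
Definition slt (a b : smax) : Prop := is_pos (sadd b (sopp a)).
Definition spreceq (a b : smax) : Prop := b = sadd a b.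
Definition sprec (a b : smax) : Prop := spreceq a b /\ a <> b.

Definition smx_mul m n p (A : 'M[smax]_(m, n)) (B : 'M[smax]_(n, p)) : 'M[smax]_(m, p) :=
  \matrix_(i, j) \big[sadd/SZero]_(k < n) smul (A i k) (B k j).
Definition smx_add m n (A B : 'M[smax]_(m, n)) : 'M[smax]_(m, n) :=
  \matrix_(i, j) sadd (A i j) (B i j).
Definition smx_zero m n : 'M[smax]_(m, n) := \matrix_(i, j) SZero.
Definition smx_id n : 'M[smax]_n := \matrix_(i, j) if i == j then sone else SZero.
Definition smx_scale m n (c : smax) (A : 'M[smax]_(m, n)) : 'M[smax]_(m, n) :=
  \matrix_(i, j) smul c (A i j).
Definition smx_opp m n (A : 'M[smax]_(m, n)) : 'M[smax]_(m, n) :=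
  \matrix_(i, j) sopp (A i j).
Definition smx_pow n (A : 'M[smax]_n) (k : nat) : 'M[smax]_n :=
  iter k (smx_mul A) (smx_id n).

Definition sdet n (M : 'M[smax]_n) : smax :=
  \big[sadd/SZero]_(s : 'S_n)
     smul (if odd_perm s then sopp sone else sone)
          (\big[smul/sone]_(i < n) M i (s i)).

Definition sadj n (M : 'M[smax]_n.+1) : 'M[smax]_n.+1 :=
  \matrix_(i, j) smul (ssgnpow (i + j)) (sdet (row' j (col' i M))).

(* Kleene star: S = (+)_{k>=0} M^k, meaning the partial sums
   (+)_{k<=N} M^k are eventually equal to S. *)
Definition smx_partial_star n (M : 'M[smax]_n) (N : nat) : 'M[smax]_n :=
  \big[@smx_add n n/smx_zero n n]_(k < N.+1) smx_pow M k.
Definition is_kleene_star n (M S : 'M[smax]_n) : Prop :=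
  exists N, forall m, (N <= m)%N -> smx_partial_star M m = S.

Definition TPD n (A : 'M[smax]_n) : Prop :=
  [/\ forall i j, A i j = A j i,
      forall i j, signed (A i j),
      forall i, slt SZero (A i i)
    & forall i j, i != j -> slt (smul (A i j) (A i j)) (smul (A i i) (A j j))].

Definition signed_vec n (v : 'cV[smax]_n) : Prop := forall i, signed (v i 0).
Definition is_seigvec n (A : 'M[smax]_n) (g : smax) (v : 'cV[smax]_n) : Prop :=
  [/\ signed_vec v, exists i, v i 0 <> SZero
    & forall i, snabla (smx_mul A v i 0) (smul g (v i 0))].
Definition is_strong_seigvec n (A : 'M[smax]_n) (g : smax) (v : 'cV[smax]_n) : Prop :=
  is_seigvec A g v /\ smx_mul A v = smx_scale g v.

End Smax.

(* Main.v *)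
Require Import Defs.
From mathcomp Require Import all_boot all_order all_algebra.
From mathcomp Require Import perm.
From HB Require Import structures.
From mathcomp Require Import zify.
Set Implicit Arguments. Unset Strict Implicit. Unset Printing Implicit Defensive.
Import GRing.Theory.

Variant cmp_spec (T : divTOAG) (a b : tog_car T) : bool -> bool -> bool -> bool -> Set :=
| CmpLt of tog_le a b & a != b : cmp_spec a b false false true false
| CmpEq of a = b : cmp_spec a b true true true true
| CmpGt of tog_le b a & a != b : cmp_spec a b false false false true.

Lemma cmpP (T : divTOAG) (a b : tog_car T) : cmp_spec a b (a == b) (b == a) (tog_le a b) (tog_le b a).
Proof.
case: (eqVneq a b) => [<-|nab]; first by rewrite tog_refl; constructor.

case: (boolP (tog_le a b)) => hab.
  case: (boolP (tog_le b a)) => hba; last by constructor.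
  by move: nab; rewrite (tog_antisym hab hba) eqxx.
have hba : tog_le b a by case/orP: (tog_total a b) => // h; rewrite h in hab.
by rewrite hba; constructor.
Qed.

Lemma cyc3 (T : divTOAG) (a b c : tog_car T) : tog_le a b -> tog_le b c -> tog_le c a -> a = b /\ b = c.
Proof.
move=> h1 h2 h3.
have hac := tog_trans h1 h2.
have eac := tog_antisym hac h3.
subst c; have eab := tog_antisym h1 h2; by subst.
Qed.

Ltac kill_neq := match goal with H : is_true (?x != ?x) |- _ => by rewrite eqxx in H end.

Ltac ord3 := match goal with
 | H1 : is_true (tog_le ?a ?b), H2 : is_true (tog_le ?b ?a) |- _ =>
   have ? := tog_antisym H1 H2; subst; kill_neq
 | H1 : is_true (tog_le ?a ?b), H2 : is_true (tog_le ?b ?c), H3 : is_true (tog_le ?c ?a) |- _ =>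
   case: (cyc3 H1 H2 H3) => ??; subst; kill_neq
 end.

Ltac brute := repeat (cbn [smod] in *; match goal with
  | |- context [@tog_le _ ?a ?b] => case: (cmpP a b) => [??|?|??]; try subst; try kill_neq
  | |- context [?a == ?b] => let t := type of a in match t with context [tog_car _] => idtac end; case: (cmpP a b) => [??|?|??]; try subst; try kill_neq
  end); cbn [smod] in *; try ord3.

Section Basic.
Variable T : divTOAG.
Local Notation G := (tog_car T).
Local Notation S := (smax T).
Local Notation le := (@tog_le T).
Local Open Scope ring_scope.

Lemma saddC : commutative (@sadd T).
Proof.
by case=> [|a|a|a] [|b|b|b] //=; rewrite /sadd /=; brute.
Qed.

Lemma saddA : associative (@sadd T).
Proof.
by case=> [|a|a|a] [|b|b|b] [|c|c|c] //=; rewrite /sadd /=; brute.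
Qed.

Lemma sadd0s : left_id (@SZero T) (@sadd T). Proof. by []. Qed.
Lemma saddS0 : right_id (@SZero T) (@sadd T). Proof. by case. Qed.
Lemma saddss (x : S) : sadd x x = x. Proof. by case: x => // a; rewrite /sadd /= eqxx. Qed.

Lemma le_add2l (c a b : G) : le (c + a) (c + b) = le a b.
Proof.
apply/idP/idP => h; last by rewrite ![c + _]addrC; apply: tog_addr.
have := tog_addr (- c) h; by rewrite ![c + _]addrC !addrK.
Qed.

Lemma eq_add2l (c a b : G) : (c + a == c + b) = (a == b).
Proof. by apply/eqP/eqP => [/addrI|->]. Qed.

Lemma smulC : commutative (@smul T).
Proof. by case=> [|a|a|a] [|b|b|b] //=; rewrite /smul /= addrC. Qed.

Lemma smulA : associative (@smul T).
Proof. by case=> [|a|a|a] [|b|b|b] [|c|c|c] //=; rewrite /smul /= addrA. Qed.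

Lemma smul1s : left_id (sone T) (@smul T).
Proof. by case=> [|a|a|a] //=; rewrite /smul /= add0r. Qed.
Lemma smuls1 : right_id (sone T) (@smul T).
Proof. by move=> x; rewrite smulC smul1s. Qed.
Lemma smul0s : left_zero (@SZero T) (@smul T). Proof. by []. Qed.
Lemma smuls0 : right_zero (@SZero T) (@smul T). Proof. by case. Qed.

Lemma smulDr : right_distributive (@smul T) (@sadd T).
Proof.
case=> [|c|c|c] [|a|a|a] [|b|b|b] //=; rewrite ?saddS0 ?smuls0 //;
rewrite /sadd /smul /= ?eq_add2l ?le_add2l; brute.
all: done.
Qed.

Lemma smulDl : left_distributive (@smul T) (@sadd T).
Proof. by move=> x y z; rewrite ![smul _ z]smulC smulDr. Qed.



End Basic.

HB.instance Definition _ (T : divTOAG) :=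
  Monoid.isComLaw.Build (smax T) (@SZero T) (@sadd T) (@saddA T) (@saddC T) (@sadd0s T).
HB.instance Definition _ (T : divTOAG) :=
  Monoid.isComLaw.Build (smax T) (sone T) (@smul T) (@smulA T) (@smulC T) (@smul1s T).

Definition senc (T : divTOAG) (x : smax T) : nat * tog_car T :=
  match x with SZero => (0%N, 0%R) | SPos g => (1%N, g) | SNeg g => (2%N, g) | SBal g => (3%N, g) end.
Definition sdec (T : divTOAG) (p : nat * tog_car T) : smax T :=
  match p.1 with 0%N => SZero T | 1%N => SPos p.2 | 2%N => SNeg p.2 | _ => SBal p.2 end.
Lemma sencK (T : divTOAG) : cancel (@senc T) (@sdec T). Proof. by case. Qed.
HB.instance Definition _ (T : divTOAG) := Equality.copy (smax T) (can_type (@sencK T)).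

Section Order.
Variable T : divTOAG.
Local Notation G := (tog_car T).
Local Notation S := (smax T).
Local Notation le := (@tog_le T).
Local Open Scope ring_scope.

Definition sle (x y : S) := sadd x y = y.

Lemma sle_refl x : sle x x. Proof. exact: saddss. Qed.
Lemma sle_trans y x z : sle x y -> sle y z -> sle x z.
Proof. by rewrite /sle => h1 h2; rewrite -h2 saddA h1. Qed.
Lemma sle_antisym x y : sle x y -> sle y x -> x = y.
Proof. by rewrite /sle => h1 h2; rewrite -h1 -{1}h2 saddC. Qed.
Lemma sle_addl x y : sle x (sadd x y). Proof. by rewrite /sle saddA saddss. Qed.
Lemma sle_addr x y : sle y (sadd x y). Proof. by rewrite saddC; apply: sle_addl. Qed.
Lemma sle_lub x y z : sle x z -> sle y z -> sle (sadd x y) z.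
Proof. by rewrite /sle => h1 h2; rewrite -saddA h2 h1. Qed.
Lemma sle0 x : sle (@SZero T) x. Proof. by []. Qed.
Lemma sle_add2 x y x' y' : sle x y -> sle x' y' -> sle (sadd x x') (sadd y y').
Proof.
move=> h1 h2; apply: sle_lub.
  by apply: sle_trans h1 _; apply: sle_addl.
by apply: sle_trans h2 _; apply: sle_addr.
Qed.
Lemma sle_mul2l z x y : sle x y -> sle (smul z x) (smul z y).
Proof. by rewrite /sle => h; rewrite -smulDr h. Qed.
Lemma sle_mul2r z x y : sle x y -> sle (smul x z) (smul y z).
Proof. by move=> h; rewrite ![smul _ z]smulC; apply: sle_mul2l. Qed.

Lemma sle_big_lub (I : Type) (r : seq I) (P : pred I) (F : I -> S) z :
  (forall i, P i -> sle (F i) z) -> sle (\big[@sadd T/@SZero T]_(i <- r | P i) F i) z.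
Proof.
move=> h; elim/big_rec: _ => // i x Pi hx; exact: sle_lub (h i Pi) hx.
Qed.

Lemma sle_big_term (I : finType) (P : pred I) (F : I -> S) i :
  P i -> sle (F i) (\big[@sadd T/@SZero T]_(j | P j) F j).
Proof. by move=> Pi; rewrite (bigD1 i) //=; apply: sle_addl. Qed.

Lemma sle_big_term_nat (m : nat) (F : nat -> S) i :
  (i < m)%N -> sle (F i) (\big[@sadd T/@SZero T]_(j < m) F j).
Proof.
move=> im; exact: (@sle_big_term 'I_m xpredT (fun j : 'I_m => F j) (Ordinal im) erefl).
Qed.

Lemma smul_bigr (I : Type) (r : seq I) (P : pred I) (F : I -> S) z :
  smul z (\big[@sadd T/@SZero T]_(i <- r | P i) F i) = \big[@sadd T/@SZero T]_(i <- r | P i) smul z (F i).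
Proof. by apply: (big_endo (smul z)); [apply: smulDr | apply: smuls0]. Qed.

Lemma smul_bigl (I : Type) (r : seq I) (P : pred I) (F : I -> S) z :
  smul (\big[@sadd T/@SZero T]_(i <- r | P i) F i) z = \big[@sadd T/@SZero T]_(i <- r | P i) smul (F i) z.
Proof. by rewrite smulC smul_bigr; apply: eq_bigr => i _; rewrite smulC. Qed.

Lemma sle_big2 (I : Type) (r : seq I) (P : pred I) (F H : I -> S) :
  (forall i, P i -> sle (F i) (H i)) ->
  sle (\big[@sadd T/@SZero T]_(i <- r | P i) F i) (\big[@sadd T/@SZero T]_(i <- r | P i) H i).
Proof. by move=> h; elim/big_rec2: _ => // i x y Pi hxy; apply: sle_add2 => //; apply: h. Qed.

End Order.

Section Dom.
Variable T : divTOAG.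
Local Notation G := (tog_car T).
Local Notation S := (smax T).
Local Notation le := (@tog_le T).
Local Open Scope ring_scope.
Local Notation Z0 := (@SZero T).

Definition lt (a b : G) := le a b && (a != b).

Lemma le_add2 (a b c d : G) : le a b -> le c d -> le (a + c) (b + d).
Proof.
move=> h1 h2; apply: (tog_trans (tog_addr c h1)).
by rewrite ![b + _]addrC; apply: tog_addr.
Qed.

Lemma lt_addr (a b c : G) : lt a b -> lt (a + c) (b + c).
Proof.
case/andP=> h1 h2; apply/andP; split; first exact: tog_addr.
by apply: contra h2 => /eqP /addIr ->.
Qed.

Lemma lt_le_trans (a b c : G) : lt a b -> le b c -> lt a c.
Proof.
case/andP=> h1 h2 h3; apply/andP; split; first exact: tog_trans h1 h3.
apply: contra h2 => /eqP eac; subst c.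
by rewrite (tog_antisym h1 h3).
Qed.

Lemma le_lt_trans (a b c : G) : le a b -> lt b c -> lt a c.
Proof.
move=> h1 /andP[h2 h3]; apply/andP; split; first exact: tog_trans h1 h2.
apply: contra h3 => /eqP eac; subst c.
by rewrite (tog_antisym h2 h1).
Qed.

Lemma lt_add2 (a b c d : G) : lt a b -> le c d -> lt (a + c) (b + d).
Proof.
move=> h1 h2; apply: (lt_le_trans (lt_addr c h1)).
by rewrite ![b + _]addrC; apply: tog_addr.
Qed.

Lemma lt_add2' (a b c d : G) : le a b -> lt c d -> lt (a + c) (b + d).
Proof. by move=> h1 h2; rewrite (addrC a) (addrC b); apply: lt_add2. Qed.

Lemma lt_le (a b : G) : lt a b -> le a b. Proof. by case/andP. Qed.
Lemma lt_nle (a b : G) : lt a b -> ~~ le b a.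
Proof. by case/andP=> h1 h2; apply/negP => h3; rewrite (tog_antisym h1 h3) eqxx in h2. Qed.
Lemma nle_lt (a b : G) : ~~ le a b -> lt b a.
Proof.
move=> h; have hba : le b a by case/orP: (tog_total a b) => // h'; rewrite h' in h.
by apply/andP; split => //; apply: contra h => /eqP ->; rewrite tog_refl.
Qed.

Definition sdom (x y : S) := y <> Z0 /\ (x = Z0 \/ lt (smod x) (smod y)).

Lemma smod_sadd (x y : S) : x <> Z0 -> y <> Z0 ->
  sadd x y <> Z0 /\ (smod (sadd x y) = smod x /\ le (smod y) (smod x)
                         \/ smod (sadd x y) = smod y /\ le (smod x) (smod y)).
Proof.
case: x => [//|a|a|a] _; case: y => [//|b|b|b] _; rewrite /sadd /=;
  case: (cmpP a b) => [h1 h2|<-|h1 h2] /=; split=> //; by [left | right | left; rewrite tog_refl].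
Qed.

Lemma sdom_add x y : sdom x y -> sadd x y = y.
Proof.
case=> hy [-> //|]; case: x => [|a|a|a] /=; first by [];
case: y hy => [//|b|b|b] _ /= /andP[h1 h2]; by rewrite /sadd /= (negbTE h2) h1.
Qed.

Lemma sdom_addr x y : sdom x y -> sadd y x = y.
Proof. by move=> h; rewrite saddC sdom_add. Qed.

Lemma sdom_sle x y : sdom x y -> sle x y. Proof. exact: sdom_add. Qed.

Lemma sdom_lub x y z : sdom x z -> sdom y z -> sdom (sadd x y) z.
Proof.
move=> [hz hx] [_ hy]; split => //.
case: hx => [->|hx]; first by case: hy; [move=> ->; left|right].
case: hy => [->|hy]; first by rewrite saddS0; right.
case: (eqVneq x Z0) => [->|/eqP nx]; first by rewrite sadd0s; right.
case: (eqVneq y Z0) => [->|/eqP ny]; first by rewrite saddS0; right.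
by right; case: (smod_sadd nx ny) => _ [[->]|[->]].
Qed.

Lemma smul_eq0 (x y : S) : smul x y = Z0 <-> x = Z0 \/ y = Z0.
Proof.
split; last by case=> ->; [|rewrite smuls0].
by case: x => [|a|a|a]; case: y => [|b|b|b] => //= h; (try discriminate); by [left|right].
Qed.

Lemma smod_mul (x y : S) : x <> Z0 -> y <> Z0 -> smod (smul x y) = smod x + smod y.
Proof. by case: x => [|a|a|a]; case: y => [|b|b|b]. Qed.

Lemma sdom_mul2 a b c d : sdom a b -> sdom c d -> sdom (smul a c) (smul b d).
Proof.
move=> [hb ha] [hd hc]; split; first by case/smul_eq0.
case: ha => [->|ha]; first by left.
case: hc => [->|hc]; first by left; rewrite smuls0.
case: (eqVneq a Z0) => [->|/eqP na]; first by left.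
case: (eqVneq c Z0) => [->|/eqP nc]; first by left; rewrite smuls0.
right; rewrite !smod_mul //; exact: lt_add2 ha (lt_le hc).
Qed.

Lemma sdom_mull z x y : z <> Z0 -> sdom x y -> sdom (smul z x) (smul z y).
Proof.
move=> hz [hy hx]; split; first by case/smul_eq0.
case: hx => [->|hx]; first by left; rewrite smuls0.
case: (eqVneq x Z0) => [->|/eqP nx]; first by left; rewrite smuls0.
by right; rewrite !smod_mul //; apply: lt_add2' (tog_refl _) hx.
Qed.

Lemma sdom_mulu u u' x y : u <> Z0 -> u' <> Z0 -> smod u = smod u' ->
  sdom x y -> sdom (smul u x) (smul u' y).
Proof.
move=> hu hu' e [hy hx]; split; first by case/smul_eq0.
case: hx => [->|hx]; first by left; rewrite smuls0.
case: (eqVneq x Z0) => [->|/eqP nx]; first by left; rewrite smuls0.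
by right; rewrite !smod_mul // e; apply: lt_add2' (tog_refl _) hx.
Qed.

Definition K (a b : S) := a = b \/ sdom a b.
Definition KS (a b : S) := a = Z0 \/ sdom a b.

Lemma K_sle a b : K a b -> sle a b. Proof. by case=> [->|/sdom_sle]; [apply: sle_refl|]. Qed.
Lemma KS_sle a b : KS a b -> sle a b. Proof. by case=> [->|/sdom_sle]. Qed.

Lemma Kmul a b c d : K a b -> K c d -> K (smul a c) (smul b d).
Proof.
case=> [<-|hab]; case=> [<-|hcd]; first by left.
- case: (eqVneq a Z0) => [->|na]; first by left.
  by right; apply: sdom_mull => //; apply/eqP.
- case: (eqVneq c Z0) => [->|nc]; first by left; rewrite !smuls0.
  by right; rewrite smulC (smulC b); apply: sdom_mull => //; apply/eqP.
- by right; apply: sdom_mul2.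
Qed.

Lemma KSmul a b c d : KS a b -> K c d -> KS (smul a c) (smul b d).
Proof.
case=> [->|hab]; first by left.
case=> [<-|hcd].
- case: (eqVneq c Z0) => [->|nc]; first by left; rewrite !smuls0.
  by right; rewrite smulC (smulC b); apply: sdom_mull => //; apply/eqP.
- by right; apply: sdom_mul2.
Qed.

Lemma Kprod (I : Type) (r : seq I) (P : pred I) (F H : I -> S) :
  (forall i, P i -> K (F i) (H i)) ->
  K (\big[@smul T/sone T]_(i <- r | P i) F i) (\big[@smul T/sone T]_(i <- r | P i) H i).
Proof.
move=> h; elim/big_rec2: _ => [|i x y Pi hxy]; first by left.
by apply: Kmul => //; apply: h.
Qed.

Lemma KSprod (I : finType) (P : pred I) (F H : I -> S) k0 :
  P k0 -> KS (F k0) (H k0) -> (forall i, P i -> K (F i) (H i)) ->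
  KS (\big[@smul T/sone T]_(i | P i) F i) (\big[@smul T/sone T]_(i | P i) H i).
Proof.
move=> Pk hk h; rewrite (bigD1 k0) //= (bigD1 k0 (P:=P)) //=.
apply: KSmul => //; apply: Kprod => i /andP[Pi _]; exact: h.
Qed.

Lemma KSmulu u u' x y : u <> Z0 -> u' <> Z0 -> smod u = smod u' ->
  KS x y -> KS (smul u x) (smul u' y).
Proof.
move=> hu hu' e [->|h]; first by left; rewrite smuls0.
by right; apply: sdom_mulu.
Qed.

Lemma soppK : involutive (@sopp T). Proof. by case. Qed.
Lemma sopp_sadd (x y : S) : sopp (sadd x y) = sadd (sopp x) (sopp y).
Proof. by case: x => [|a|a|a]; case: y => [|b|b|b] //=; rewrite /sadd /=; brute. Qed.
Lemma smulNl (x y : S) : smul (sopp x) y = sopp (smul x y).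
Proof. by case: x => [|a|a|a]; case: y => [|b|b|b]. Qed.
Lemma smulNr (x y : S) : smul x (sopp y) = sopp (smul x y).
Proof. by rewrite smulC smulNl smulC. Qed.
Lemma sopp_mul1 (x : S) : sopp x = smul (sopp (sone T)) x.
Proof. by rewrite smulNl smul1s. Qed.
Lemma smod_sopp (x : S) : smod (sopp x) = smod x. Proof. by case: x. Qed.
Lemma sopp_eq0 (x : S) : sopp x = Z0 <-> x = Z0. Proof. by case: x. Qed.

Lemma snabla_signed_eq (x y : S) : signed x -> signed y -> snabla x y -> x = y.
Proof.
move=> sx sy; rewrite /snabla /balanced.
case: x sx => [|a|a|a] sx; last by case: (sx a erefl).
all: case: y sy => [|b|b|b] sy; try by case: (sy b erefl).
all: rewrite /sadd /=.
all: try (case: (cmpP a b) => [??|<-|??]).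
all: move=> H; case: H => [e|[? e]]; try discriminate; try done.
Qed.

Lemma signed_mul (x y : S) : signed x -> signed y -> signed (smul x y).
Proof.
case: x => [|a|a|a] sx; last by case: (sx a erefl).
all: case: y => [|b|b|b] sy; try by case: (sy b erefl).
all: by move=> c.
Qed.

Lemma signed_mulP_inv a (x : S) : signed (smul (SPos a) x) -> signed x.
Proof. by case: x => [|b|b|b] // h c _; apply: (h (a + b)). Qed.

Lemma balanced_mul (z b : S) : balanced b -> balanced (smul z b).
Proof.
case=> [->|[c ->]]; first by left; rewrite smuls0.
by case: z => [|d|d|d]; [left|right; eexists|right; eexists|right; eexists].
Qed.

Lemma balanced_opp (b : S) : balanced b -> balanced (sopp b).
Proof. by case=> [->|[c ->]]; [left|right; exists c]. Qed.

Lemma snabla_refl (x : S) : snabla x x.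
Proof.
rewrite /snabla /balanced; case: x => [|a|a|a]; first by left.
all: by right; exists a; rewrite /sadd /= eqxx.
Qed.

Lemma snabla_mull (z x y : S) : snabla x y -> snabla (smul z x) (smul z y).
Proof. by rewrite /snabla -smulNr -smulDr; apply: balanced_mul. Qed.

Lemma snabla_sym (x y : S) : snabla x y -> snabla y x.
Proof.
rewrite /snabla => h; have := balanced_opp h.
by rewrite sopp_sadd soppK saddC.
Qed.

Lemma sdom_sopp (a b : S) : sdom a b -> sdom (sopp a) b.
Proof. by case=> hb [->|h]; split => //; [left|right; rewrite smod_sopp]. Qed.

Lemma is_pos_slt0 (a : S) : slt Z0 a -> exists g, a = SPos g.
Proof. by rewrite /slt saddS0; case: a => [|g|g|g] [h e] //; exists g; case: e. Qed.

Lemma pos_sadd_neg p q : is_pos (sadd (SPos p) (SNeg q)) -> lt q p.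
Proof.
rewrite /sadd /=; case: (cmpP p q) => [h1 h2|<-|h1 h2]; case=> c //= e.
apply/andP; split => //; by rewrite eq_sym.
Qed.

Lemma sprec_pos p q : sprec (SPos p) (SPos q) -> lt p q.
Proof.
case; rewrite /spreceq /sadd /=; case: (cmpP p q) => [h1 h2|<-|h1 h2] //= e ne.
by apply/andP.
by case: e => e; rewrite e eqxx in h2.
Qed.

Lemma spreceq_pos p q : spreceq (SPos p) (SPos q) -> le p q.
Proof.
rewrite /spreceq /sadd /=; case: (cmpP p q) => [h1 h2|<-|h1 h2] e //; try exact: tog_refl.
by case: e => e; rewrite e eqxx in h2.
Qed.

End Dom.

Arguments smul : simpl never.
Arguments sadd : simpl never.
Arguments sone : simpl never.
Arguments sopp : simpl never.

Lemma nonuniq_split (X : eqType) (s : seq X) :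
  ~~ uniq s -> exists p1 x p2 p3, s = p1 ++ x :: p2 ++ x :: p3.
Proof.
elim: s => //= y s IH; rewrite negb_and negbK; case/orP => [ys | /IH [p1 [x [p2 [p3 ->]]]]].
- by case/splitPr: ys => p2 p3; exists [::], y, p2, p3.
- by exists (y :: p1), x, p2, p3.
Qed.

Section Walks.
Variable T : divTOAG.
Local Notation S := (smax T).
Local Notation Z0 := (@SZero T).
Local Notation S1 := (sone T).
Variable n : nat.
Variable C : 'M[smax T]_n.+1.
Hypothesis hC : forall x y, K (C x y) S1.

Fixpoint wt (x : 'I_n.+1) (t : seq 'I_n.+1) : S :=
  if t is y :: t' then smul (C x y) (wt y t') else S1.

Lemma wt_cat x p q : wt x (p ++ q) = smul (wt x p) (wt (last x p) q).
Proof. elim: p x => [|y p IH] x /=; first by rewrite smul1s. by rewrite IH smulA. Qed.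

Lemma wt_K x t : K (wt x t) S1.
Proof. elim: t x => [|y t IH] x /=; first by left. by have := Kmul (hC x y) (IH y); rewrite smul1s. Qed.

Lemma sle_K1 z a : K a S1 -> sle (smul z a) z.
Proof. move=> h; rewrite -{2}[z]smuls1; apply: K_sle; apply: Kmul => //; by left. Qed.

Lemma cyc0 x q r : sle (wt x (q ++ x :: r)) (wt x r).
Proof. rewrite -cat_rcons wt_cat last_rcons smulC; exact: sle_K1 (wt_K _ _). Qed.

Lemma cyc1 x p y q r : sle (wt x (p ++ y :: q ++ y :: r)) (wt x (p ++ y :: r)).
Proof.
rewrite -[p ++ y :: q ++ y :: r]cat_rcons -[p ++ y :: r]cat_rcons !wt_cat last_rcons.
apply: sle_mul2l; rewrite -wt_cat; exact: cyc0.
Qed.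

Lemma cyc_reduce x t : exists t',
  [/\ uniq (x :: t'), last x t' = last x t, (size t' <= size t)%N & sle (wt x t) (wt x t')].
Proof.
move: {2}(size t) (leqnn (size t)) => N; elim: N t => [|N IH] t ht.
  by case: t ht => // _; exists [::]; split => //; apply: sle_refl.
case: (boolP (uniq (x :: t))) => U; first by exists t; split => //; apply: sle_refl.
case: (nonuniq_split U) => [[|z p1] [y [p2 [p3 e]]]].
- case: e => exy et; subst y t.
  have hs : (size p3 <= N)%N.
    move: ht; rewrite ?size_cat /=; move: (size p2) (size p3) => a b; lia.
  case: (IH p3 hs) => t' [U' el hsz hle]; exists t'; split => //.
  + by rewrite el last_cat.
  + move: hsz; rewrite ?size_cat /=; move: (size p2) (size p3) (size t') => a b c; lia.
  + exact: sle_trans (cyc0 _ _ _) hle.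
- case: e => exz et; subst z t.
  have hs : (size (p1 ++ y :: p3) <= N)%N.
    move: ht; rewrite ?size_cat /= ?size_cat /=.
    move: (size p1) (size p2) (size p3) => a b c; lia.
  case: (IH _ hs) => t' [U' el hsz hle]; exists t'; split => //.
  + by rewrite el !last_cat /= last_cat.
  + move: hsz; rewrite ?size_cat /= ?size_cat /=.
    move: (size p1) (size p2) (size p3) (size t') => a b c d; lia.
  + exact: sle_trans (cyc1 _ _ _ _ _) hle.
Qed.

Lemma uniq_size (x : 'I_n.+1) t : uniq (x :: t) -> (size t <= n)%N.
Proof.
move=> U; have := max_card (mem (x :: t)); rewrite (card_uniqP U) card_ord /=; move: (size t) => a; lia.
Qed.

Lemma pow0E i j : smx_pow C 0 i j = if i == j then S1 else Z0.
Proof. by rewrite /smx_pow /= /smx_id mxE. Qed.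

Lemma powSE k i j : smx_pow C k.+1 i j =
  \big[@sadd T/@SZero T]_(l < n.+1) smul (C i l) (smx_pow C k l j).
Proof. by rewrite /smx_pow iterS /smx_mul mxE. Qed.

Lemma wt_up i t : sle (wt i t) (smx_pow C (size t) i (last i t)).
Proof.
elim: t i => [|y t IH] i /=; first by rewrite pow0E eqxx; apply: sle_refl.
rewrite powSE; apply: sle_trans (sle_mul2l (C i y) (IH y)) _.
exact: (@sle_big_term _ _ xpredT (fun l => smul (C i l) (smx_pow C (size t) l (last y t))) y).
Qed.

Lemma wt_down k i j y z :
  (forall t, size t = k -> last i t = j -> sle (smul y (wt i t)) z) ->
  sle (smul y (smx_pow C k i j)) z.
Proof.
elim: k i y => [|k IH] i y h.
  rewrite pow0E; case: eqP => [eij|_]; last by rewrite smuls0.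
  by have := h [::] erefl eij.
rewrite powSE smul_bigr; apply: sle_big_lub => l _; rewrite smulA; apply: IH => t st lt.
by rewrite -smulA; apply: (h (l :: t)) => //=; rewrite st.
Qed.

Lemma pstarE N i j : smx_partial_star C N i j =
  \big[@sadd T/@SZero T]_(k < N.+1) smx_pow C k i j.
Proof.
rewrite /smx_partial_star; elim/big_rec2: _ => [|k X Y _ <-]; by rewrite mxE.
Qed.

Lemma pow_le_pstar k i j : sle (smx_pow C k i j) (smx_partial_star C n i j).
Proof.
rewrite -[smx_pow C k i j]smul1s; apply: wt_down => t _ lt; rewrite smul1s.
case: (cyc_reduce i t) => t' [U el _ hle]; apply: sle_trans hle _.
apply: sle_trans (wt_up i t') _; rewrite el lt pstarE.
apply: (sle_big_term_nat (fun k => smx_pow C k i j)); by have := uniq_size U.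
Qed.

Lemma pstar_stable N : (n <= N)%N -> smx_partial_star C N = smx_partial_star C n.
Proof.
move=> hN; apply/matrixP => i j; apply: sle_antisym.
- rewrite [X in sle X _]pstarE; apply: sle_big_lub => k _; exact: pow_le_pstar.
- rewrite !pstarE; apply: sle_big_lub => k _.
  apply: (sle_big_term_nat (fun k => smx_pow C k i j)).
  by rewrite (leq_trans (ltn_ord k)).
Qed.

End Walks.

Section Next.
Variable X : finType.
Definition nextf (c : seq X) (x : X) := if uniq c then next c x else x.
Lemma nextf_inj c : injective (nextf c).
Proof. rewrite /nextf; case: (boolP (uniq c)) => U; [exact: (can_inj (prev_next U)) | by []]. Qed.
Definition pnext c : {perm X} := perm (@nextf_inj c).
Lemma pnextE c : uniq c -> pnext c =1 next c.
Proof. by move=> U x; rewrite permE /nextf U. Qed.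

Lemma next_at_in (z a b y : X) p : z \in belast y p -> next_at z a y p = next_at z b y p.
Proof.
elim: p y => //= y' p IH y; rewrite inE; case: (z =P y) => //= _ h; exact: IH.
Qed.

Lemma next_at_notin (z a y : X) p : z \notin belast y p ->
  next_at z a y p = if z == last y p then a else z.
Proof.
elim: p y => [|y' p IH] y //=; rewrite inE negb_or => /andP[ne nin].
by rewrite (negbTE ne); apply: IH.
Qed.

Lemma next_last (x : X) s : uniq (x :: s) -> next (x :: s) (last x s) = x.
Proof. by move=> U; rewrite next_nth mem_last index_last //= nth_default. Qed.

Lemma last_notin_belast (y : X) s : uniq (y :: s) -> last y s \notin belast y s.
Proof. by rewrite lastI rcons_uniq => /andP[]. Qed.

Lemma next_cons2 (x y : X) c1 z : uniq (x :: y :: c1) ->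
  next (x :: y :: c1) z = if z == x then y else if z == last y c1 then x else next (y :: c1) z.
Proof.
move=> U; rewrite /next /=.
case: (z =P x) => // _.
have Uy : uniq (y :: c1) by case/andP: U.
have nl := last_notin_belast Uy.
case: (boolP (z \in belast y c1)) => hz.
- rewrite (next_at_in _ y hz).
  have -> : (z == last y c1) = false by apply/negbTE; apply: contraNneq nl => <-.
  by [].
- by rewrite !next_at_notin //; case: ifP.
Qed.

Lemma pnext_cons2 (x y : X) c1 : uniq (x :: y :: c1) ->
  pnext (x :: y :: c1) = (pnext (y :: c1) * tperm x y)%g.
Proof.
move=> U; have Uy : uniq (y :: c1) by case/andP: U.
have xny : x \notin y :: c1 by case/andP: U.
have yc1 : y \notin c1 by case/andP: Uy.
apply/permP => z; rewrite permM !pnextE // next_cons2 //.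
case: (z =P x) => [->|/eqP zx].
  by rewrite (next_nth (y :: c1) x) (negbTE xny) tpermL.
case: (z =P last y c1) => [->|/eqP zl].
  by rewrite next_last // tpermR.
set w := next (y :: c1) z.
have wy : y != w.
  apply: contraNneq zl => wy; have := prev_next Uy z; rewrite -/w -wy => <-.
  by rewrite prev_nth mem_head (memNindex yc1) -last_nth.
have wx : x != w.
  case: (boolP (z \in y :: c1)) => hz.
    apply: contraNneq xny => ->; by rewrite /w mem_next.
  by rewrite /w (next_nth (y :: c1) z) (negbTE hz) eq_sym.
by rewrite tpermD.
Qed.

Lemma pnext_nil : pnext [::] = 1%g.
Proof. by apply/permP => z; rewrite pnextE // perm1. Qed.

Lemma pnext1 (x : X) : pnext [:: x] = 1%g.
Proof. by apply/permP => z; rewrite pnextE // perm1 /next /=; case: eqP => // ->. Qed.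

Lemma odd_pnext c : uniq c -> odd_perm (pnext c) = odd (size c).-1.
Proof.
elim: c => [|x c IH] U; first by rewrite pnext_nil odd_perm1.
case: c IH U => [|y c1] IH U; first by rewrite pnext1 odd_perm1.
have xy : x != y by case/andP: U; rewrite inE negb_or => /andP[].
rewrite pnext_cons2 // odd_permM odd_tperm IH; last by case/andP: U.
by rewrite xy /= addbT.
Qed.
End Next.

Section Minor.
Variable n : nat.
Variable i : 'I_n.+1.
Variable w : seq 'I_n.+1.
Hypothesis U : uniq (i :: w).
Hypothesis L0 : last i w = ord0.
Local Notation c := (i :: w).

Lemma pc0 : pnext c ord0 = i.
Proof. by rewrite pnextE // -L0 next_last. Qed.

Lemma pc_lift k : pnext c (lift ord0 k) != i.
Proof.
apply/eqP => h; have : pnext c (lift ord0 k) = pnext c ord0 by rewrite pc0.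
by move/perm_inj/eqP; rewrite eq_sym (negbTE (neq_lift _ _)).
Qed.

Definition scf k := odflt k (unlift i (pnext c (lift ord0 k))).
Lemma scf_lift k : lift i (scf k) = pnext c (lift ord0 k).
Proof.
rewrite /scf; case: unliftP => [j ->|e] //=.
by have := pc_lift k; rewrite e eqxx.
Qed.

Lemma scf_inj : injective scf.
Proof.
move=> k1 k2 e; have := congr1 (lift i) e; rewrite !scf_lift => /perm_inj.
exact: lift_inj.
Qed.

Definition sc : 'S_n := perm scf_inj.

Lemma sc_lift : lift_perm ord0 i sc = pnext c.
Proof.
apply/permP => z; case: (unliftP ord0 z) => [k ->|->].
  by rewrite lift_perm_lift permE scf_lift.
by rewrite lift_perm_id pc0.
Qed.

Lemma odd_sc : odd_perm sc = odd i (+) odd (size w).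
Proof.
have := odd_lift_perm ord0 i sc; rewrite sc_lift odd_pnext //= => ->.
by rewrite addbA addbb.
Qed.

End Minor.

Section Sexp.
Variable T : divTOAG.
Local Notation S := (smax T).
Local Notation S1 := (sone T).
Definition sgnb (b : bool) : S := if b then sopp S1 else S1.

Lemma sexpS (x : S) k : sexp x k.+1 = smul x (sexp x k). Proof. by []. Qed.
Lemma sexp0 (x : S) : sexp x 0 = S1. Proof. by []. Qed.
Lemma sexpD (x : S) a b : sexp x (a + b) = smul (sexp x a) (sexp x b).
Proof. elim: a => [|a IH]; first by rewrite add0n sexp0 smul1s. by rewrite addSn !sexpS IH smulA. Qed.
Lemma sexpM (x y : S) k : sexp (smul x y) k = smul (sexp x k) (sexp y k).
Proof.
elim: k => [|k IH]; first by rewrite !sexp0 smul1s.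
by rewrite !sexpS IH -!smulA; congr smul; rewrite !smulA (smulC y).
Qed.
Lemma sexp1 k : sexp S1 k = S1.
Proof. by elim: k => // k IH; rewrite sexpS IH smul1s. Qed.

Lemma sgnbM a b : smul (sgnb a) (sgnb b) = sgnb (a (+) b).
Proof.
by case: a; case: b; rewrite /sgnb /= ?smul1s ?smuls1 // smulNl smulNr soppK smul1s.
Qed.
Lemma sexpN1 k : sexp (sopp S1) k = sgnb (odd k).
Proof.
elim: k => // k IH; rewrite sexpS IH /= -[sopp S1]/(sgnb true) sgnbM.
by case: (odd k).
Qed.
Lemma ssgnpowE k : ssgnpow T k = sgnb (odd k). Proof. by []. Qed.

Lemma sgnb_neq0 b : sgnb b <> SZero T. Proof. by case: b. Qed.
Lemma smod_sgnb b : smod (sgnb b) = 0%R. Proof. by case: b. Qed.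

Lemma smulCA : left_commutative (@smul T).
Proof. by move=> x y z; rewrite !smulA (smulC x). Qed.
Lemma smulAC : right_commutative (@smul T).
Proof. by move=> x y z; rewrite -!smulA (smulC y). Qed.
End Sexp.

Section Main.
Variable T : divTOAG.
Local Notation G := (tog_car T).
Local Notation S := (smax T).
Local Notation Z0 := (@SZero T).
Local Notation S1 := (sone T).
Local Notation le := (@tog_le T).
Variable n : nat.
Variable A : 'M[smax T]_n.+1.
Variable g : G.
Hypothesis hA00 : A ord0 ord0 = SPos g.
Hypothesis hAdom : forall x y : 'I_n.+1, (x != ord0) || (y != ord0) -> sdom (A x y) (SPos g).

Local Notation gam := (SPos g).
Local Notation gami := (SPos (- g)%R).

Lemma gamiK : smul gami gam = S1.
Proof. by rewrite /smul /sone addNr. Qed.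

Definition Cm := smx_scale (sinv gam) A.
Lemma CmE x y : Cm x y = smul gami (A x y). Proof. by rewrite mxE. Qed.

Lemma Cm00 : Cm ord0 ord0 = S1. Proof. by rewrite CmE hA00 gamiK. Qed.
Lemma Cm_dom x y : (x != ord0) || (y != ord0) -> sdom (Cm x y) S1.
Proof. by move=> h; rewrite CmE -gamiK; apply: sdom_mull => //; apply: hAdom. Qed.
Lemma hCK x y : K (Cm x y) S1.
Proof.
case: (boolP ((x != ord0) || (y != ord0))) => h; first by right; apply: Cm_dom.
by move: h; rewrite negb_or !negbK => /andP[/eqP -> /eqP ->]; left; rewrite Cm00.
Qed.

Definition Mg := smx_add (smx_scale gam (smx_id T n.+1)) (smx_opp A).


Lemma Mg_diag x : x != ord0 -> Mg x x = gam.
Proof.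
move=> hx; rewrite !mxE eqxx smuls1; apply: sdom_addr; apply: sdom_sopp.
by apply: hAdom; rewrite hx.
Qed.

Lemma Mg_off x y : x != y -> Mg x y = sopp (A x y).
Proof. by move=> hxy; rewrite !mxE (negbTE hxy) smuls0 sadd0s. Qed.

Definition Tm (i : 'I_n.+1) (s : 'S_n) : S :=
  smul (sgnb T (odd_perm s)) (\big[@smul T/S1]_(k < n) Mg (lift ord0 k) (lift i (s k))).

Definition vv := col ord0 (sadj Mg).

Lemma vvE i : vv i ord0 = \big[@sadd T/Z0]_(s : 'S_n) smul (ssgnpow T i) (Tm i s).
Proof.
rewrite /vv !mxE addn0 /sdet smul_bigr; apply: eq_bigr => s _; congr smul.
rewrite /Tm; congr smul; apply: eq_bigr => k _; by rewrite !mxE.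
Qed.

Lemma big_lift0 (F : 'I_n.+1 -> S) :
  \big[@smul T/S1]_(k < n) F (lift ord0 k) = \big[@smul T/S1]_(x | x != ord0) F x.
Proof.
by rewrite [RHS]big_mkcond big_ord_recl /= smul1s.
Qed.

Lemma prod_next (M : 'M[smax T]_n.+1) x r : uniq (x :: r) ->
  \big[@smul T/S1]_(z <- belast x r) M z (next (x :: r) z) = wt M x r.
Proof.
elim: r x => [|y r IH] x U; first by rewrite big_nil.
have -> : belast x (y :: r) = x :: belast y r by [].
have -> : wt M x (y :: r) = smul (M x y) (wt M y r) by [].
rewrite big_cons next_cons2 // eqxx -IH; last by case/andP: U.
congr smul; apply: eq_big_seq => z hz; rewrite next_cons2 //.
have Uy : uniq (y :: r) by case/andP: U.
have -> : (z == x) = false.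
  apply/negbTE; apply: contraTneq (mem_belast hz) => ->; by case/andP: U.
have -> : (z == last y r) = false.
  apply/negbTE; apply: contraTneq hz => ->; exact: last_notin_belast.
by [].
Qed.

Lemma wt_Mg x r : uniq (x :: r) -> wt Mg x r = smul (sexp (sopp S1) (size r)) (wt A x r).
Proof.
elim: r x => [|y r IH] x U; first by rewrite /= smul1s.
have xy : x != y by case/andP: U; rewrite inE negb_or => /andP[].
rewrite /= Mg_off // IH; last by case/andP: U.
by rewrite [sopp (A x y)]sopp_mul1 !smulA; congr smul; rewrite smulAC.
Qed.

Lemma wt_Cm x r : wt Cm x r = smul (sexp gami (size r)) (wt A x r).
Proof.
elim: r x => [|y r IH] x; first by rewrite /= smul1s.
by rewrite /= CmE IH !smulA; congr smul; rewrite smulAC.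
Qed.

Section Path.
Variable i : 'I_n.+1.
Variable w : seq 'I_n.+1.
Hypothesis U : uniq (i :: w).
Hypothesis L0 : last i w = ord0.

Lemma c_rcons : i :: w = rcons (belast i w) ord0.
Proof. by rewrite lastI L0. Qed.
Lemma zero_notin : ord0 \notin belast i w.
Proof. by have := U; rewrite c_rcons rcons_uniq => /andP[]. Qed.
Lemma uniq_belast : uniq (belast i w).
Proof. by have := U; rewrite c_rcons rcons_uniq => /andP[]. Qed.
Lemma zero_in : ord0 \in i :: w.
Proof. by rewrite c_rcons mem_rcons mem_head. Qed.

Lemma prod_split (F : 'I_n.+1 -> S) : (forall x, x \notin i :: w -> F x = gam) ->
  \big[@smul T/S1]_(k < n) F (lift ord0 k) =
  smul (\big[@smul T/S1]_(x <- belast i w) F x) (sexp gam (n - size w)).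
Proof.
move=> hF; rewrite big_lift0 (bigID (fun x => x \in i :: w)) /=; congr smul.
  rewrite big_uniq ?uniq_belast //; apply: eq_bigl => x.
  rewrite c_rcons mem_rcons inE.
  case: (eqVneq x ord0) => [->|hx] /=; first by rewrite (negbTE zero_notin).
  by [].
rewrite (eq_bigr (fun _ => gam)); last by move=> x /andP[_ /hF].
rewrite (eq_bigl [predC (i :: w)]); last first.
  move=> x /=; case: (boolP (x \in i :: w)) => hx; first by rewrite andbF.
  rewrite andbT; apply: contraNneq hx => ->; exact: zero_in.
rewrite big_const; congr sexp.
have := cardC (mem (i :: w)); rewrite card_ord (card_uniqP U) /=.
move: (#|_|) => a; lia.
Qed.

Lemma Kcore : smul (ssgnpow T i) (Tm i (sc U L0)) = smul (sexp gam n) (wt Cm i w).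
Proof.
rewrite /Tm.
have E1 : \big[@smul T/S1]_(k < n) Mg (lift ord0 k) (lift i (sc U L0 k)) =
          \big[@smul T/S1]_(k < n) (fun x => Mg x (next (i :: w) x)) (lift ord0 k).
  by apply: eq_bigr => k _; rewrite permE scf_lift // pnextE.
rewrite E1 (@prod_split (fun x => Mg x (next (i :: w) x))); last first.
  move=> x hx; rewrite next_nth (negbTE hx) Mg_diag //.
  by apply: contraNneq hx => ->; apply: zero_in.
rewrite prod_next // wt_Mg // wt_Cm odd_sc ssgnpowE sexpN1.
have hL := uniq_size U.
set W := wt A i w; set L := size w.
have hs : smul (sgnb T (odd i)) (smul (sgnb T (odd i (+) odd L)) (sgnb T (odd L))) = S1.
  by rewrite !sgnbM; case: (odd i); case: (odd L).
have -> : sexp gam n = smul (sexp gam (n - L)) (sexp gam L) by rewrite -sexpD subnK.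
have hg : smul (sexp gam L) (sexp gami L) = S1 by rewrite -sexpM smulC gamiK sexp1.
transitivity (smul (smul (sgnb T (odd i)) (smul (sgnb T (odd i (+) odd L)) (sgnb T (odd L))))
              (smul W (sexp gam (n - L)))).
  by rewrite !smulA.
rewrite hs smul1s.
transitivity (smul (sexp gam (n - L)) (smul (smul (sexp gam L) (sexp gami L)) W)).
  by rewrite hg smul1s smulC.
by rewrite !smulA.
Qed.

End Path.

Lemma orbit_facts (i : 'I_n.+1) (s : 'S_n) : exists w,
  [/\ uniq (i :: w), last i w = ord0 &
      forall x, x \in i :: w -> next (i :: w) x = lift_perm ord0 i s x].
Proof.
set f := fun x => lift_perm ord0 i s x.
have finj : injective f by apply: perm_inj.
have Oc := orbit_uniq f i; have Cy := cycle_orbit finj i.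
rewrite /orbit in Oc Cy; case: (order f i) (order_gt0 f i) Oc Cy => // k _ Oc Cy.
exists (traject f (f i) k).
have hn : forall x, x \in i :: traject f (f i) k -> next (i :: traject f (f i) k) x = f x.
  by move=> x hx; have := next_cycle Cy hx => /eqP.
split => //.
have hl := mem_last i (traject f (f i) k).
have := hn _ hl; rewrite next_last // => e.
have e0 : f ord0 = i by rewrite /f lift_perm_id.
by apply: finj; rewrite -e e0.
Qed.

Lemma D_bound (i : 'I_n.+1) (s : 'S_n) : exists w (U : uniq (i :: w)) (L0 : last i w = ord0),
  sle (Tm i s) (Tm i (sc U L0)).
Proof.
case: (orbit_facts i s) => w [U L0 hn]; exists w, U, L0.
set s' := sc U L0.
have hk : forall k, s k = s' k \/
    [/\ lift ord0 k \notin i :: w, lift i (s k) != lift ord0 k & lift i (s' k) = lift ord0 k].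
  move=> k; have e' : lift i (s' k) = next (i :: w) (lift ord0 k).
    by rewrite permE scf_lift // pnextE.
  case: (boolP (lift ord0 k \in i :: w)) => hx.
    by left; apply: (@lift_inj _ i); rewrite e' hn // lift_perm_lift.
  have e'' : lift i (s' k) = lift ord0 k by rewrite e' next_nth (negbTE hx).
  case: (eqVneq (lift i (s k)) (lift ord0 k)) => he.
    by left; apply: (@lift_inj _ i); rewrite he e''.
  by right.
have hKS : forall k, lift i (s k) != lift ord0 k -> lift i (s' k) = lift ord0 k ->
    sdom (Mg (lift ord0 k) (lift i (s k))) (Mg (lift ord0 k) (lift i (s' k))).
  move=> k h1 h2; rewrite h2 Mg_diag; last by rewrite eq_sym neq_lift.
  rewrite Mg_off; last by rewrite eq_sym.
  by apply: sdom_sopp; apply: hAdom; rewrite eq_sym neq_lift.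
case: (eqVneq s s') => [->|ne]; first exact: sle_refl.
have : ~~ [forall k, s k == s' k].
  by apply: contra ne => /forallP h; apply/eqP/permP => k; apply/eqP/h.
case/forallPn => k0 hk0.
apply: KS_sle; rewrite /Tm; apply: KSmulu; [exact: sgnb_neq0|exact: sgnb_neq0|by rewrite !smod_sgnb|].
apply: (@KSprod _ _ xpredT _ _ k0) => //.
  case: (hk k0) => [e|[_ h1 h2]]; first by rewrite e eqxx in hk0.
  by right; apply: hKS.
move=> k _; case: (hk k) => [->|[_ h1 h2]]; first by left.
by right; apply: hKS.
Qed.

Local Notation P := (smx_partial_star Cm n).

Lemma vv_main i : vv i ord0 = smul (sexp gam n) (P i ord0).
Proof.
apply: sle_antisym.
- rewrite vvE; apply: sle_big_lub => s _.
  case: (D_bound i s) => w [U [L0 hle]].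
  apply: sle_trans (sle_mul2l _ hle) _; rewrite Kcore; apply: sle_mul2l.
  apply: sle_trans (wt_up Cm i w) _; rewrite L0; exact: (pow_le_pstar hCK).
- rewrite pstarE smul_bigr; apply: sle_big_lub => k _.
  apply: wt_down => t _ lt.
  case: (cyc_reduce hCK i t) => t' [U el _ hle].
  apply: sle_trans (sle_mul2l _ hle) _.
  have L0 : last i t' = ord0 by rewrite el.
  rewrite -(Kcore U L0) vvE.
  exact: (@sle_big_term _ _ xpredT (fun s => smul (ssgnpow T i) (Tm i s)) (sc U L0)).
Qed.

Lemma P00 : P ord0 ord0 = S1.
Proof.
apply: sle_antisym.
- rewrite pstarE; apply: sle_big_lub => k _.
  rewrite -[smx_pow _ _ _ _]smul1s; apply: wt_down => t _ lt; rewrite smul1s.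
  case: (cyc_reduce hCK ord0 t) => t' [U el _ hle]; apply: sle_trans hle _.
  case: t' U el => [|y t'] U el; first exact: sle_refl.
  exfalso; have e0 : last y t' = ord0 by rewrite -lt -el.
  have := mem_last y t'; rewrite e0 => h.
  by case/andP: U => /negP.
- rewrite pstarE; apply: sle_trans _ (sle_big_term_nat (fun k => smx_pow Cm k ord0 ord0) (ltn0Sn n)).
  by rewrite pow0E eqxx; apply: sle_refl.
Qed.

Lemma P_rec i j : P i j = sadd (smx_id T n.+1 i j)
   (\big[@sadd T/Z0]_(l < n.+1) smul (Cm i l) (P l j)).
Proof.
transitivity (smx_partial_star Cm n.+1 i j); first by rewrite (pstar_stable hCK (leqnSn n)).
rewrite pstarE big_ord_recl pow0E; congr sadd.
under eq_bigr => k _ do rewrite (_ : nat_of_ord (lift ord0 k) = k.+1) // powSE.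
rewrite exchange_big; apply: eq_bigr => l _.
by rewrite pstarE smul_bigr.
Qed.

Lemma CP i : \big[@sadd T/Z0]_(l < n.+1) smul (Cm i l) (P l ord0) = P i ord0.
Proof.
have h := P_rec i ord0.
have hid : smx_id T n.+1 i ord0 = if i == ord0 then S1 else Z0 by rewrite /smx_id mxE.
rewrite hid in h.
case: (eqVneq i ord0) => [ei|hi]; last by rewrite h (negbTE hi) sadd0s.
subst i; apply: sle_antisym; first by rewrite [X in sle _ X]h; apply: sle_addr.
apply: sle_trans _ (@sle_big_term _ _ xpredT (fun l => smul (Cm ord0 l) (P l ord0)) ord0 erefl).
by rewrite Cm00 smul1s; apply: sle_refl.
Qed.

End Main.

Section Elim.
Variable T : divTOAG.
Local Notation G := (tog_car T).
Local Notation S := (smax T).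
Local Notation Z0 := (@SZero T).
Local Notation S1 := (sone T).
Local Notation le := (@tog_le T).

Definition lvle (a b : S) : bool := (a == Z0) || ((b != Z0) && le (smod a) (smod b)).

Lemma lvle_refl a : lvle a a.
Proof. by rewrite /lvle tog_refl andbT orbN. Qed.

Lemma lvle_trans b a c : lvle a b -> lvle b c -> lvle a c.
Proof.
rewrite /lvle; case: (eqVneq a Z0) => //= _ /andP[nb hab].
by rewrite (negbTE nb) /= => /andP[-> hbc] /=; apply: tog_trans hab hbc.
Qed.

Lemma lvle_total a b : lvle a b || lvle b a.
Proof.
rewrite /lvle; case: (eqVneq a Z0) => //= na; case: (eqVneq b Z0) => //= nb.
by rewrite tog_total.
Qed.

Lemma lvle0 a : lvle a Z0 -> a = Z0.
Proof. by rewrite /lvle eqxx /= orbF => /eqP. Qed.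

Lemma nlvle_sdom a b : ~~ lvle b a -> sdom a b.
Proof.
rewrite /lvle negb_or negb_and negbK => /andP[nb /orP[/eqP->|h]].
  by split; [apply/eqP | left].
split; first exact/eqP.
case: (eqVneq a Z0) => [->|_]; first by left.
by right; apply: nle_lt.
Qed.

Lemma sdom_nlvle a b : sdom a b -> ~~ lvle b a.
Proof.
case=> nb [->|h]; rewrite /lvle negb_or negb_and negbK; apply/andP; split; try exact/eqP.
  by rewrite eqxx.
by rewrite lt_nle // orbT.
Qed.

Lemma lvle_sdom_trans a b c : lvle a b -> sdom b c -> sdom a c.
Proof.
move=> hab hbc; apply: nlvle_sdom; apply: contra (sdom_nlvle hbc) => hca.
exact: lvle_trans hca hab.
Qed.

Lemma lvle_lub (a b z : S) : lvle a z -> lvle b z -> lvle (sadd a b) z.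
Proof.
case: (eqVneq a Z0) => [->|na]; first by rewrite sadd0s.
case: (eqVneq b Z0) => [->|nb]; first by rewrite saddS0.
move=> ha hb; case: (@smod_sadd _ a b (elimN eqP na) (elimN eqP nb)) => ns hs.
rewrite /lvle; have -> : (sadd a b == Z0) = false by apply/eqP.
move: ha hb; rewrite /lvle (negbTE na) (negbTE nb) /= => /andP[-> ha] /andP[_ hb] /=.
by case: hs => [[-> _]|[-> _]].
Qed.

Lemma lvle_saddl (a b : S) : lvle a (sadd a b).
Proof.
case: (eqVneq a Z0) => [->|na]; first by rewrite /lvle eqxx.
case: (eqVneq b Z0) => [->|nb]; first by rewrite saddS0 lvle_refl.
case: (@smod_sadd _ a b (elimN eqP na) (elimN eqP nb)) => ns hs.
rewrite /lvle (negbTE na) /=; apply/andP; split; first exact/eqP.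
by case: hs => [[-> _]|[-> h]]; [apply: tog_refl|].
Qed.

Lemma lvle_saddr (a b : S) : lvle b (sadd a b).
Proof. by rewrite saddC; apply: lvle_saddl. Qed.

Lemma sdom0 z : z <> Z0 -> sdom Z0 z. Proof. by move=> h; split => //; left. Qed.

Lemma sdom_mul_lv c x M : sdom c S1 -> lvle x M -> M <> Z0 -> sdom (smul c x) M.
Proof.
move=> [_ hc] hx hM.
case: (eqVneq x Z0) => [->|nx]; first by rewrite smuls0; apply: sdom0.
case: hc => [->|hc]; first by rewrite smul0s; apply: sdom0.
case: (eqVneq c Z0) => [->|nc]; first by rewrite smul0s; apply: sdom0.
split => //; right; rewrite smod_mul; try exact/eqP.
move: hx; rewrite /lvle (negbTE nx) /= => /andP[_ hx].
by rewrite -[smod M]add0r; apply: lt_add2 hc hx.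
Qed.

Lemma sdom_big (I : Type) (r : seq I) (P : pred I) (F : I -> S) M :
  M <> Z0 -> (forall j, P j -> sdom (F j) M) -> sdom (\big[@sadd T/Z0]_(j <- r | P j) F j) M.
Proof.
move=> hM h; elim/big_rec: _ => [|j x Pj hx]; first exact: sdom0.
exact: sdom_lub (h j Pj) hx.
Qed.

Lemma sadd_sdom_eq (a b u : S) : sdom b u -> sadd a b = u -> a = u.
Proof.
move=> hbu e; case: (boolP (lvle a b)) => hab.
  have : lvle u b by rewrite -e; apply: lvle_lub => //; apply: lvle_refl.
  by move=> h; case/negP: (sdom_nlvle hbu).
by move: e; rewrite sdom_addr //; apply: nlvle_sdom.
Qed.


Lemma signed_bal (x : S) : signed x -> balanced x -> x = Z0.
Proof. by move=> sx [//|[a e]]; case: (sx a). Qed.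

Lemma exists_max_seq (I : eqType) (f : I -> S) (s : seq I) : s != [::] ->
  exists2 x, x \in s & forall y, y \in s -> lvle (f y) (f x).
Proof.
elim: s => // a s IH _; case: (eqVneq s [::]) => [->|ns].
  by exists a; rewrite ?mem_head // => y; rewrite inE => /eqP ->; apply: lvle_refl.
case: (IH ns) => x hx hmax.
case/orP: (lvle_total (f a) (f x)) => hax.
  exists x; first by rewrite inE hx orbT.
  by move=> y; rewrite inE => /orP[/eqP ->|/hmax].
exists a; first exact: mem_head.
move=> y; rewrite inE => /orP[/eqP ->|/hmax h]; first exact: lvle_refl.
exact: lvle_trans h hax.
Qed.

Lemma elim_uniq m (Cc : 'I_m -> 'I_m -> S) (w y : 'I_m -> S) (J : {set 'I_m}) :
  (forall i j, i \in J -> sdom (Cc i j) S1) ->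
  (forall i, i \in J -> snabla (w i) (\big[@sadd T/Z0]_j smul (Cc i j) (w j))) ->
  (forall i, i \in J -> y i = \big[@sadd T/Z0]_j smul (Cc i j) (y j)) ->
  (forall i, signed (w i)) -> (forall i, signed (y i)) ->
  (forall i, i \notin J -> w i = y i) -> forall i, w i = y i.
Proof.
move: {2}#|J| (leqnn #|J|) => N; elim: N J => [|N IH] J hJ hC hw hy sw sy hout.
  by move=> i; apply: hout; move: hJ; rewrite leqn0 => /eqP/cards0_eq ->; rewrite inE.
case: (eqVneq J set0) => [J0|Jn].
  by move=> i; apply: hout; rewrite J0 inE.
pose f i := if lvle (w i) (y i) then y i else w i.
have fw : forall i, lvle (w i) (f i).
  by move=> i; rewrite /f; case: ifP => // _; apply: lvle_refl.
have fy : forall i, lvle (y i) (f i).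
  move=> i; rewrite /f; case: ifP => [_|h]; first exact: lvle_refl.
  by case/orP: (lvle_total (w i) (y i)) => //; rewrite h.
have : enum J != [::].
  apply: contra Jn => /eqP e; apply/eqP/setP => x; rewrite inE -mem_enum e.
  by [].
case/(exists_max_seq f) => i0; rewrite mem_enum => hi0 hmax.
have hjw : forall j, j \in J -> lvle (w j) (f i0).
  by move=> j hj; apply: lvle_trans (fw j) (hmax j _); rewrite mem_enum.
have hjy : forall j, j \in J -> lvle (y j) (f i0).
  by move=> j hj; apply: lvle_trans (fy j) (hmax j _); rewrite mem_enum.
have wi0 : w i0 = y i0.
  case: (eqVneq (f i0) Z0) => [M0|Mn0].
    have w0 : w i0 = Z0 by apply: lvle0; rewrite -M0; apply: fw.
    have y0 : y i0 = Z0 by apply: lvle0; rewrite -M0; apply: fy.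
    by rewrite w0 y0.
  have Mn0' : f i0 <> Z0 by apply/eqP.
  have dw : sdom (\big[@sadd T/Z0]_(j | j \in J) smul (Cc i0 j) (w j)) (f i0).
    by apply: sdom_big => // j hj; apply: sdom_mul_lv => //; [apply: hC | apply: hjw].
  have dy : sdom (\big[@sadd T/Z0]_(j | j \in J) smul (Cc i0 j) (y j)) (f i0).
    by apply: sdom_big => // j hj; apply: sdom_mul_lv => //; [apply: hC | apply: hjy].
  have hRw := hw i0 hi0; have hRy := hy i0 hi0.
  rewrite (bigID (fun j => j \in J)) /= in hRw.
  rewrite (bigID (fun j => j \in J)) /= in hRy.
  have eout : \big[@sadd T/Z0]_(j | ~~ (j \in J)) smul (Cc i0 j) (w j) =
              \big[@sadd T/Z0]_(j | ~~ (j \in J)) smul (Cc i0 j) (y j).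
    by apply: eq_bigr => j hj; rewrite hout.
  rewrite eout in hRw.
  set Out := \big[@sadd T/Z0]_(j | ~~ (j \in J)) smul (Cc i0 j) (y j) in hRw hRy.
  set Iw := \big[@sadd T/Z0]_(j | j \in J) smul (Cc i0 j) (w j) in hRw dw.
  set Iy := \big[@sadd T/Z0]_(j | j \in J) smul (Cc i0 j) (y j) in hRy dy.
  case: (boolP (lvle (w i0) (y i0))) => hwy.
    have eM : f i0 = y i0 by rewrite /f hwy.
    rewrite eM in dw dy.
    have eO : Out = y i0 by apply: (sadd_sdom_eq dy); rewrite saddC -hRy.
    rewrite eO sdom_add // in hRw.
    exact: snabla_signed_eq hRw.
  have eM : f i0 = w i0 by rewrite /f (negbTE hwy).
  rewrite eM in dw dy Mn0'.
  have dyw : sdom (y i0) (w i0) by apply: nlvle_sdom.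
  have dO : sdom Out (w i0).
    by apply: lvle_sdom_trans dyw; rewrite hRy; apply: lvle_saddr.
  have dR : sdom (sadd Iw Out) (w i0) by apply: sdom_lub.
  exfalso; apply: Mn0'; apply: signed_bal (sw i0) _.
  move: hRw; rewrite /snabla sdom_addr //; exact: sdom_sopp.
have hcard : (#|J :\ i0| <= N)%N.
  by move: hJ; rewrite (cardsD1 i0 J) hi0 add1n ltnS.
apply: (IH (J :\ i0)) => //.
- by move=> i j; rewrite in_setD1 => /andP[_ /hC].
- by move=> i; rewrite in_setD1 => /andP[_ /hw].
- by move=> i; rewrite in_setD1 => /andP[_ /hy].
- move=> i; rewrite in_setD1 negb_and negbK => /orP[/eqP ->|]; first exact: wi0.
  exact: hout.
Qed.

End Elim.

Lemma sexp_pos (T : divTOAG) (g : tog_car T) k : exists a, sexp (SPos g) k = SPos a.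
Proof.
elim: k => [|k [a IH]]; first by exists 0%R.
by rewrite sexpS IH; exists (g + a)%R.
Qed.

Theorem theorem5p11 (T : divTOAG) (n : nat) (A : 'M[smax T]_n.+1) :
  TPD A ->
  (forall i j : 'I_n.+1, (i <= j)%N -> spreceq (A j j) (A i i)) ->
  (forall h : (1 < n.+1)%N, sprec (A (Ordinal h) (Ordinal h)) (A ord0 ord0)) ->
  let gamma := A ord0 ord0 in
  let v := col ord0 (sadj (smx_add (smx_scale gamma (smx_id T n.+1)) (smx_opp A))) in
  (exists S, is_kleene_star (smx_scale (sinv gamma) A) S /\
             v = smx_scale (sexp gamma n) (col ord0 S)) /\
  smx_mul A v = smx_scale gamma v /\
  (signed_vec v ->
     is_strong_seigvec A gamma v /\
     forall w, is_seigvec A gamma w ->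
       exists lambda, signed lambda /\ w = smx_scale lambda v).
Proof.
move=> [hsym hsig hpos hoff] hord hstrict.
have [g hA00] := is_pos_slt0 (hpos ord0).
have hdiag : forall x : 'I_n.+1, x != ord0 -> exists2 d, A x x = SPos d & lt d g.
  move=> x hx; have [d hd] := is_pos_slt0 (hpos x).
  exists d => //.
  have x0 : (0 < x)%N.
    by rewrite lt0n; apply: contra hx => /eqP e; apply/eqP/val_inj.
  have h1 : (1 < n.+1)%N by have := ltn_ord x; move: x0; move: (nat_of_ord x) => k; lia.
  have [d1 hd1] := is_pos_slt0 (hpos (Ordinal h1)).
  have l1 : lt d1 g by apply: sprec_pos; rewrite -hd1 -hA00; apply: hstrict.
  have l2 : tog_le d d1.
    apply: spreceq_pos; rewrite -hd -hd1; apply: hord.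
    by [].
  exact: le_lt_trans l2 l1.
have hdle : forall x : 'I_n.+1, exists2 d, A x x = SPos d & tog_le d g.
  move=> x; case: (eqVneq x ord0) => [->|hx]; first by exists g => //; apply: tog_refl.
  by case: (hdiag x hx) => d hd hlt; exists d => //; apply: lt_le.
have hAdom : forall x y : 'I_n.+1, (x != ord0) || (y != ord0) -> sdom (A x y) (SPos g).
  move=> x y hxy; case: (eqVneq x y) => [exy|nxy].
    subst y; have hx : x != ord0 by rewrite orbb in hxy.
    case: (hdiag x hx) => d -> hlt; by split => //; right.
  have := hoff x y nxy; case: (hdle x) => dx -> hx; case: (hdle y) => dy -> hy.
  have := hsig x y; case: (A x y) => [|a|a|a] sa h; first by split => //; left.
  - split => //; right; apply: nle_lt; apply/negP => hga.
    have := pos_sadd_neg h; rewrite /= => hl.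
    have := le_lt_trans (le_add2 hga hga) (lt_le_trans hl (le_add2 hx hy)).
    by rewrite /lt eqxx andbF.
  - split => //; right; apply: nle_lt; apply/negP => hga.
    have := pos_sadd_neg h; rewrite /= => hl.
    have := le_lt_trans (le_add2 hga hga) (lt_le_trans hl (le_add2 hx hy)).
    by rewrite /lt eqxx andbF.
  - by case: (sa a).
cbv zeta; rewrite hA00.
have hCK' := hCK hA00 hAdom.
set P := smx_partial_star (Cm A g) n.
have vm : forall i, col ord0 (sadj (Mg A g)) i ord0 = smul (sexp (SPos g) n) (P i ord0).
  by move=> i; have := vv_main hA00 hAdom i.
have ACm : forall i l, A i l = smul (SPos g) (Cm A g i l).
  by move=> i l; rewrite CmE smulA (smulC (SPos g)) gamiK smul1s.
have hAv : smx_mul A (col ord0 (sadj (Mg A g))) =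
           smx_scale (SPos g) (col ord0 (sadj (Mg A g))).
  apply/matrixP => i j; rewrite (ord1 j) [LHS]mxE [RHS]mxE.
  under eq_bigr => l _ do rewrite vm ACm.
  rewrite vm.
  transitivity (smul (smul (SPos g) (sexp (SPos g) n))
     (\big[@sadd T/SZero T]_(l < n.+1) smul (Cm A g i l) (P l ord0))).
    rewrite smul_bigr; apply: eq_bigr => l _.
    by rewrite !smulA; congr smul; rewrite smulAC.
  by rewrite (CP hA00 hAdom) smulA.
split.
  exists P; split.
    by exists n => m hm; apply: (pstar_stable hCK').
  apply/matrixP => i j; rewrite (ord1 j) [RHS]mxE [col _ P _ _]mxE.
  exact: vm.
split; first exact: hAv.
rewrite -/(Mg A g) => sv.
have hsP : forall i, signed (P i ord0).
  move=> i; have := sv i; rewrite vm; case: (sexp_pos g n) => a ->.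
  exact: signed_mulP_inv.
split.
  split; last exact: hAv.
  split => //.
  - exists ord0; rewrite vm (P00 hA00 hAdom) smuls1; case: (sexp_pos g n) => a ->; by [].
  - by move=> i; rewrite hAv mxE; apply: snabla_refl.
move=> w [sw _ hw].
exists (smul (w ord0 ord0) (sexp (SPos (- g)%R) n)); split.
  apply: signed_mul (sw ord0) _; case: (sexp_pos (- g)%R n) => a ->; by move=> c.
have key : forall i, w i ord0 = smul (w ord0 ord0) (P i ord0).
  apply: (@elim_uniq T n.+1 (fun i j => Cm A g i j) (fun i => w i ord0)
            (fun i => smul (w ord0 ord0) (P i ord0)) [set i | i != ord0]).
  - by move=> i j; rewrite inE => hi; apply: (Cm_dom hAdom); rewrite hi.
  - move=> i _; have := hw i; rewrite mxE => h.
    rewrite (eq_bigr (fun l => smul (SPos g) (smul (Cm A g i l) (w l ord0)))) in h; last first.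
      by move=> l _; rewrite ACm -smulA.
    rewrite -smul_bigr in h; have := snabla_mull (SPos (- g)%R) h.
    by rewrite !smulA gamiK !smul1s; apply: snabla_sym.
  - move=> i _ /=; under eq_bigr => l _ do rewrite smulCA.
    by rewrite -smul_bigr (CP hA00 hAdom).
  - by move=> i; apply: sw.
  - by move=> i; apply: signed_mul (sw ord0) (hsP i).
  - by move=> i; rewrite inE negbK => /eqP ->; rewrite (P00 hA00 hAdom) smuls1.
apply/matrixP => i j; have -> : j = ord0 by apply/val_inj; case: j => [[|]].
rewrite mxE vm (key i).
by rewrite -smulA (smulA (sexp _ n)) -sexpM gamiK sexp1 smul1s.
Qed.
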